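(* Let $X$ be a real Banach space and $Y$ a closed subspace of $X$. The following are equivalent: (a) $Y$ has property-$(wU)$ in $X$. (b) For every proximinal closed subspace $Z\subseteq Y$, the subspace $Y/Z$ has property-$(wU)$ in $X/Z$. (c) For every $x^*\in X^*$ such that $x^*(y)=\|x^*\|$ for some $y\in S_Y$, one has $P_{Y^\perp}(x^* )=\{0\}$.
   Context: For a closed subspace $Y$ of $X$ and $y^*\in Y^*$, a norm-preserving (Hahn--Banach) extension of $y^*$ is an $x^*\in X^*$ with $x^*|_Y=y^*$ and $\|x^*\|=\|y^*\|$. $Y$ has property-$(wU)$ in $X$ if every $y^*\in Y^*$ that attains its norm on the unit sphere $S_Y$ (i.e. $\|y^*\|=y^*(y_0)$ for some $y_0\in S_Y$) has a unique norm-preserving extension to $X$. A subspace $Z$ of a normed space $W$ is proximinal if for each $w\in W$ the set $P_Z(w)=\{z\in Z:\|w-z\|=d(w,Z)\}$ is nonempty, where $d(w,Z)=\inf_{z\in Z}\|w-z\|$. $Y^\perp=\{x^*\in X^*: x^*|_Y=0\}$, and $P_{Y^\perp}(x^* )$ is the set of best approximations to $x^*$ from $Y^\perp$ in $X^*$. $Y/Z$ is regarded as a subspace of $X/Z$ with the quotient norm. *)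

(* Defs.v *)
From HB Require Import structures.
From mathcomp Require Import all_boot all_order all_algebra.
From mathcomp Require Import all_classical all_reals all_analysis.
Set Implicit Arguments. Unset Strict Implicit. Unset Printing Implicit Defensive.
Import Order.TTheory GRing.Theory Num.Theory.
Import numFieldNormedType.Exports.
Local Open Scope classical_set_scope.
Local Open Scope ring_scope.

Definition is_subspace (R : realType) (X : normedModType R) (Y : set X) : Prop :=
  Y 0 /\ forall (a : R) (x y : X), Y x -> Y y -> Y (a *: x + y).

Definition closed_subspace (R : realType) (X : normedModType R) (Y : set X) : Prop :=
  is_subspace Y /\ closed Y.

Definition dist_to (R : realType) (X : normedModType R) (x : X) (Z : set X) : R :=
  inf [set `|x - z| | z in Z].

Definition proximinal (R : realType) (X : normedModType R) (Z : set X) : Prop :=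
  forall x : X, exists z, Z z /\ `|x - z| = dist_to x Z.

(* Generic layer: X carrying a seminorm p.  With p = norm we get X itself; with
   p = dist_to . Z we get (a representative-level description of) the quotient
   X/Z.  A functional on the subspace Y (w.r.t. p) is represented by a function
   f : X -> R of which only the values on Y matter. *)
Definition linear_on (R : realType) (X : normedModType R) (Y : set X) (f : X -> R) : Prop :=
  forall (a : R) (x y : X), Y x -> Y y -> f (a *: x + y) = a * f x + f y.

Definition bounded_on (R : realType) (X : normedModType R) (p : X -> R) (Y : set X)
  (f : X -> R) : Prop :=
  exists C : R, forall y, Y y -> `|f y| <= C * p y.

Definition dual_on (R : realType) (X : normedModType R) (p : X -> R) (Y : set X)
  (f : X -> R) : Prop := linear_on Y f /\ bounded_on p Y f.

Definition opnorm (R : realType) (X : normedModType R) (p : X -> R) (Y : set X)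
  (f : X -> R) : R :=
  sup [set `|f y| | y in [set y | Y y /\ p y <= 1]].

Definition attains_norm (R : realType) (X : normedModType R) (p : X -> R) (Y : set X)
  (f : X -> R) : Prop :=
  exists y0, Y y0 /\ p y0 = 1 /\ f y0 = opnorm p Y f.

Definition np_extension (R : realType) (X : normedModType R) (p : X -> R) (Y : set X)
  (f g : X -> R) : Prop :=
  dual_on p setT g /\ (forall y, Y y -> g y = f y) /\ opnorm p setT g = opnorm p Y f.

Definition prop_wU (R : realType) (X : normedModType R) (p : X -> R) (Y : set X) : Prop :=
  forall f : X -> R, dual_on p Y f -> attains_norm p Y f ->
    (exists g, np_extension p Y f g) /\
    (forall g1 g2, np_extension p Y f g1 -> np_extension p Y f g2 -> g1 = g2).

Definition wU_in (R : realType) (X : normedModType R) (Y : set X) : Prop :=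
  prop_wU (fun x : X => `|x|) Y.

(* Y/Z has property-(wU) in X/Z, X/Z with the quotient norm x + Z |-> d(x, Z). *)
Definition wU_quot (R : realType) (X : normedModType R) (Y Z : set X) : Prop :=
  prop_wU (fun x : X => dist_to x Z) Y.

Definition dual (R : realType) (X : normedModType R) (f : X -> R) : Prop :=
  dual_on (fun x : X => `|x|) setT f.

Definition dnorm (R : realType) (X : normedModType R) (f : X -> R) : R :=
  opnorm (fun x : X => `|x|) setT f.

Definition annihilator (R : realType) (X : normedModType R) (Y : set X) : set (X -> R) :=
  [set g | dual g /\ forall y, Y y -> g y = 0].

Definition best_approx_annih (R : realType) (X : normedModType R) (Y : set X)
  (xs : X -> R) : set (X -> R) :=
  [set g | annihilator Y g /\
     dnorm (xs - g) = inf [set dnorm (xs - h) | h in annihilator Y]].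

(* Main.v *)
Require Import Defs.
From HB Require Import structures.
From mathcomp Require Import all_boot all_order all_algebra.
From mathcomp Require Import all_classical all_reals all_analysis.
From mathcomp Require Import ring lra.
Import Order.TTheory GRing.Theory Num.Theory.
Import numFieldNormedType.Exports.
Local Open Scope classical_set_scope.
Local Open Scope ring_scope.
Set Implicit Arguments. Unset Strict Implicit.

Lemma lin0 (R : realType) (X : normedModType R) (W : set X) (f : X -> R) :
  W 0 -> linear_on W f -> f 0 = 0.
Proof.
move=> W0 lf; have := lf 1 0 0 W0 W0; rewrite scale1r addr0 mul1r => h.
by rewrite -[LHS]addr0 in h; exact: esym (addrI _ h).
Qed.

Lemma linZ (R : realType) (X : normedModType R) (W : set X) (f : X -> R) a y :
  W 0 -> linear_on W f -> W y -> f (a *: y) = a * f y.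
Proof.
move=> W0 lf Wy; have := lf a y 0 Wy W0; rewrite addr0 (lin0 W0 lf) addr0 //.
Qed.

Lemma linB (R : realType) (X : normedModType R) (W : set X) (f : X -> R) x y :
  linear_on W f -> W x -> W y -> f (x - y) = f x - f y.
Proof.
move=> lf Wx Wy; have := lf (-1) y x Wy Wx; rewrite scaleN1r mulN1r => h.
by rewrite addrC h addrC.
Qed.

Lemma subB (R : realType) (X : normedModType R) (W : set X) x y :
  is_subspace W -> W x -> W y -> W (x - y).
Proof. by move=> [_ Wl] Wx Wy; have := Wl (-1) y x Wy Wx; rewrite scaleN1r addrC. Qed.

Lemma subZ (R : realType) (X : normedModType R) (W : set X) a y :
  is_subspace W -> W y -> W (a *: y).
Proof. by move=> [W0 Wl] Wy; have := Wl a y 0 Wy W0; rewrite addr0. Qed.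

Lemma nb (R : realType) (X : normedModType R) (W : set X) (f : X -> R) :
  bounded_on (fun x : X => `|x|) W f ->
  has_ubound [set `|f y| | y in [set y | W y /\ `|y| <= 1]].
Proof.
move=> [C bC]; exists `|C| => _ [y [Wy y1] <-].
have := bC y Wy; have := ler_norm C; have := normr_ge0 y; have := normr_ge0 C.
nra.
Qed.

Lemma opnorm_ge (R : realType) (X : normedModType R) (W : set X) (f : X -> R) y :
  bounded_on (fun x : X => `|x|) W f -> W y -> `|y| <= 1 ->
  `|f y| <= opnorm (fun x : X => `|x|) W f.
Proof. by move=> bf Wy y1; apply: (ub_le_sup (nb bf)); exists y. Qed.

Lemma opnorm_le (R : realType) (X : normedModType R) (W : set X) (f : X -> R) M :
  W 0 -> (forall y, W y -> `|y| <= 1 -> `|f y| <= M) ->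
  opnorm (fun x : X => `|x|) W f <= M.
Proof.
move=> W0 h; apply: ge_sup; first by exists `|f 0|; exists 0 => //; split => //; rewrite normr0.
by move=> _ [y [Wy y1] <-]; exact: h.
Qed.

Lemma opnorm_ge0 (R : realType) (X : normedModType R) (W : set X) (f : X -> R) :
  bounded_on (fun x : X => `|x|) W f -> W 0 -> 0 <= opnorm (fun x : X => `|x|) W f.
Proof.
move=> bf W0; apply: le_trans (opnorm_ge bf W0 _); rewrite ?normr0 //.
Qed.

Lemma le_opnorm_mul (R : realType) (X : normedModType R) (W : set X) (f : X -> R) y :
  is_subspace W -> linear_on W f -> bounded_on (fun x : X => `|x|) W f -> W y ->
  `|f y| <= opnorm (fun x : X => `|x|) W f * `|y|.
Proof.
move=> sW lf bf Wy; have W0 := sW.1.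
have [->|y0] := eqVneq y 0.
  by rewrite (lin0 W0 lf) !normr0 mulr0.
have ny : 0 < `|y| by rewrite normr_gt0.
have Wy' : W (`|y|^-1 *: y) by exact: subZ.
have := opnorm_ge bf Wy' _; rewrite normrZ normfV normr_id mulVf ?gt_eqF // => /(_ (lexx _)).
rewrite (linZ _ W0 lf Wy) normrM normfV normr_id.
by rewrite ler_pdivrMl // mulrC.
Qed.

Lemma d_ge0 (R : realType) (X : normedModType R) (Z : set X) x :
  Z 0 -> 0 <= dist_to x Z.
Proof.
move=> Z0; apply: lb_le_inf; first by exists `|x - 0|; exists 0.
by move=> _ [z _ <-].
Qed.

Lemma d_le (R : realType) (X : normedModType R) (Z : set X) x z :
  Z z -> dist_to x Z <= `|x - z|.
Proof.
move=> Zz; apply: ge_inf; last by exists z.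
by exists 0 => _ [z' _ <-].
Qed.

Lemma d_Z (R : realType) (X : normedModType R) (Z : set X) z :
  Z z -> dist_to z Z = 0.
Proof.
move=> Zz; apply/le_anti/andP; split; first by have := d_le z Zz; rewrite subrr normr0.
apply: lb_le_inf; first by exists `|z - z|; exists z.
by move=> _ [z' _ <-].
Qed.

Lemma opnorm_dZ (R : realType) (X : normedModType R) (Z W : set X) (h : X -> R) :
  is_subspace W -> Z 0 -> Z `<=` W -> proximinal Z -> linear_on W h ->
  (forall z, Z z -> h z = 0) ->
  opnorm (fun x => dist_to x Z) W h = opnorm (fun x : X => `|x|) W h.
Proof.
move=> sW Z0 ZW pZ lh hZ; rewrite /opnorm; congr sup.
apply/seteqP; split => _ [y [Wy y1] <-] /=.
- have [z [Zz dz]] := pZ y; exists (y - z).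
    by split; [exact: subB (ZW _ Zz) | rewrite dz].
  by rewrite (linB lh Wy (ZW _ Zz)) (hZ z Zz) subr0.
- exists y => //; split => //; apply: le_trans (d_le y Z0) _; by rewrite subr0.
Qed.

Lemma bd_dn (R : realType) (X : normedModType R) (Z W : set X) (h : X -> R) :
  Z 0 -> bounded_on (fun x => dist_to x Z) W h -> bounded_on (fun x : X => `|x|) W h.
Proof.
move=> Z0 [C bC]; exists `|C| => y Wy; have := bC y Wy.
have := d_le y Z0; rewrite subr0 => h1; have := d_ge0 y Z0.
have := ler_norm C; have := normr_ge0 C; nra.
Qed.

Lemma bd_nd (R : realType) (X : normedModType R) (Z W : set X) (h : X -> R) :
  is_subspace W -> Z `<=` W -> proximinal Z -> linear_on W h ->
  (forall z, Z z -> h z = 0) ->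
  bounded_on (fun x : X => `|x|) W h -> bounded_on (fun x => dist_to x Z) W h.
Proof.
move=> sW ZW pZ lh hZ [C bC]; exists C => y Wy.
have [z [Zz dz]] := pZ y; rewrite /= -dz.
have := bC _ (subB sW Wy (ZW _ Zz)); by rewrite (linB lh Wy (ZW _ Zz)) (hZ z Zz) subr0.
Qed.

Lemma vanish (R : realType) (X : normedModType R) (Z W : set X) (h : X -> R) :
  Z `<=` W -> bounded_on (fun x => dist_to x Z) W h -> forall z, Z z -> h z = 0.
Proof.
move=> ZW [C bC] z Zz; have := bC z (ZW _ Zz); rewrite /= d_Z // mulr0.
by rewrite normr_le0 => /eqP.
Qed.

Lemma is_subspaceT (R : realType) (X : normedModType R) : is_subspace (@setT X).
Proof. by []. Qed.

Lemma ext_conv (R : realType) (X : normedModType R) (Z Y : set X) (f g : X -> R) :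
  is_subspace Y -> Z 0 -> Z `<=` Y -> proximinal Z -> linear_on Y f ->
  (forall z, Z z -> f z = 0) ->
  np_extension (fun x => dist_to x Z) Y f g <-> np_extension (fun x : X => `|x|) Y f g.
Proof.
move=> sY Z0 ZY pZ lf fZ.
have EY := opnorm_dZ sY Z0 ZY pZ lf fZ.
split.
- move=> [[lg bg] [agr hn]].
  have gZ := vanish (@subsetT _ Z) bg.
  split; first by split => //; exact: bd_dn bg.
  split => //; rewrite -(opnorm_dZ (@is_subspaceT _ _) Z0 (@subsetT _ Z) pZ lg gZ).
  by rewrite hn EY.
- move=> [[lg bg] [agr hn]].
  have gZ : forall z, Z z -> g z = 0 by move=> z Zz; rewrite agr ?fZ //; exact: ZY.
  split; first by split => //; exact: bd_nd (@is_subspaceT _ _) (@subsetT _ Z) pZ lg gZ bg.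
  split => //; rewrite (opnorm_dZ (@is_subspaceT _ _) Z0 (@subsetT _ Z) pZ lg gZ).
  by rewrite hn EY.
Qed.

Lemma wU_ab (R : realType) (X : normedModType R) (Y : set X) :
  is_subspace Y -> wU_in Y ->
  forall Z : set X, closed_subspace Z -> Z `<=` Y -> proximinal Z -> wU_quot Y Z.
Proof.
move=> sY hA Z [[Z0 sZ] _] ZY pZ f [lf bf] [y0 [Yy0 [dy0 fy0]]].
have fZ := vanish ZY bf.
have EY := opnorm_dZ sY Z0 ZY pZ lf fZ.
have bn := bd_dn Z0 bf.
have att : attains_norm (fun x : X => `|x|) Y f.
  have [z0 [Zz0 dz0]] := pZ y0.
  exists (y0 - z0); split; first exact: subB sY Yy0 (ZY _ Zz0).
  split; first by rewrite /= dz0.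
  by rewrite (linB lf Yy0 (ZY _ Zz0)) (fZ z0 Zz0) subr0 fy0 EY.
have [[g hg] uniq] := hA f (conj lf bn) att.
split.
  by exists g; apply/(ext_conv _ sY Z0 ZY pZ lf fZ).
by move=> g1 g2 h1 h2; apply: uniq; apply/(ext_conv _ sY Z0 ZY pZ lf fZ).
Qed.

Lemma dist_set0 (R : realType) (X : normedModType R) (x : X) : dist_to x [set 0] = `|x|.
Proof. by rewrite /dist_to image_set1 subr0 inf1. Qed.

Lemma wU_ba (R : realType) (X : normedModType R) (Y : set X) :
  is_subspace Y ->
  (forall Z : set X, closed_subspace Z -> Z `<=` Y -> proximinal Z -> wU_quot Y Z) ->
  wU_in Y.
Proof.
move=> [Y0 Yl] hB.
have := hB [set 0]; rewrite /wU_quot.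
have -> : (fun x : X => dist_to x [set 0]) = (fun x : X => `|x|).
  by apply/funext => x; exact: dist_set0.
apply.
- split; last exact: (accessible_closed_set1 (hausdorff_accessible (@norm_hausdorff _ _))).
  split => // a x y -> ->; by rewrite scaler0 addr0.
- by move=> _ ->.
- by move=> x; exists 0; split => //; rewrite dist_set0 subr0.
Qed.

Lemma dual_diff (R : realType) (X : normedModType R) (f g : X -> R) :
  dual f -> dual g -> dual (f - g).
Proof.
move=> [lf [C1 b1]] [lg [C2 b2]]; split.
  move=> a x y _ _.
  change (f (a *: x + y) - g (a *: x + y) = a * (f x - g x) + (f y - g y)).
  rewrite (lf a x y) // (lg a x y) //; ring.
exists (C1 + C2) => x _; have := b1 x I; have := b2 x I.
change (`|g x| <= C2 * `|x| -> `|f x| <= C1 * `|x| -> `|f x - g x| <= (C1 + C2) * `|x|).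
rewrite mulrDl; have := ler_normB (f x) (g x); lra.
Qed.

Lemma dual_zero (R : realType) (X : normedModType R) : dual (fun _ : X => 0 : R).
Proof.
split; first by move=> a x y _ _; rewrite mulr0 addr0.
by exists 0 => x _; rewrite normr0 mul0r.
Qed.

Lemma keyK (R : realType) (X : normedModType R) (Y : set X) (xs : X -> R) y :
  is_subspace Y -> dual xs -> Y y -> `|y| = 1 -> xs y = dnorm xs ->
  inf [set dnorm (xs - h) | h in annihilator Y] = dnorm xs /\
  opnorm (fun x : X => `|x|) Y xs = dnorm xs.
Proof.
move=> [Y0 Yl] [lx bx] Yy y1 xsy.
have dn0 : 0 <= dnorm xs by exact: opnorm_ge0.
have e0 : xs - (fun _ => 0) = xs by apply/funext => x; exact: subr0.
split.
- apply/le_anti/andP; split.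
  + apply: ge_inf.
      exists (dnorm xs) => _ [h [dh hY] <-].
      rewrite -xsy -[xs y]subr0 -(hY y Yy) -[xs y - h y]ger0_norm.
        have [_ bd] := dual_diff (conj lx bx) dh; have hle : `|y| <= 1 by rewrite y1.
        exact: (opnorm_ge bd I hle).
      by rewrite hY // subr0 xsy.
    by exists (fun _ => 0); [split => //; exact: dual_zero | rewrite e0].
  + apply: lb_le_inf; first by exists (dnorm (xs - (fun _ => 0))); exists (fun _ => 0) => //; split => //; exact: dual_zero.
    move=> _ [h [dh hY] <-].
    rewrite -[X in X <= _]xsy -[xs y]subr0 -(hY y Yy) -[xs y - h y]ger0_norm.
      have [_ bd] := dual_diff (conj lx bx) dh; have hle : `|y| <= 1 by rewrite y1.
        exact: (opnorm_ge bd I hle).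
    by rewrite hY // subr0 xsy.
- have bY : bounded_on (fun x : X => `|x|) Y xs.
    by case: bx => C bC; exists C => x _; exact: bC.
  apply/le_anti/andP; split.
    by apply: opnorm_le => // y' _ y'1; apply: opnorm_ge.
  by rewrite -xsy; apply: le_trans (ler_norm _) _; apply: opnorm_ge bY Yy _; rewrite y1.
Qed.

Lemma wU_ac (R : realType) (X : normedModType R) (Y : set X) :
  is_subspace Y -> wU_in Y ->
  forall xs : X -> R, dual xs ->
    (exists y, Y y /\ `|y| = 1 /\ xs y = dnorm xs) ->
    best_approx_annih Y xs = [set (fun _ : X => 0 : R)].
Proof.
move=> sY hA xs dx [y [Yy [y1 xsy]]].
have [Einf EY] := keyK sY dx Yy y1 xsy.
have e0 : xs - (fun _ => 0) = xs by apply/funext => x; exact: subr0.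
have [lx bx] := dx.
have bY : bounded_on (fun x : X => `|x|) Y xs.
  by case: bx => C bC; exists C => x _; exact: bC.
have [_ uniq] := hA xs (conj (fun a x y _ _ => lx a x y I I) bY)
  (ex_intro _ y (conj Yy (conj y1 (etrans xsy (esym EY))))).
have extx : np_extension (fun x : X => `|x|) Y xs xs by split => //; split.
apply/seteqP; split => g.
- move=> [[dg gY] hg]; rewrite Einf in hg.
  have ext2 : np_extension (fun x : X => `|x|) Y xs (xs - g).
    split; first exact: dual_diff.
    split; last by rewrite EY.
    by move=> y' Yy'; change (xs y' - g y' = xs y'); rewrite gY // subr0.
  have := uniq _ _ extx ext2 => E; apply/funext => x /=.
  have := congr1 (fun k => k x) E => /= /eqP.
  change (xs x == xs x - g x -> g x = 0).
  by rewrite -subr_eq0 opprB addrC subrK => /eqP.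
- move=> /= ->; split; first by split; [exact: dual_zero | by []].
  by rewrite Einf e0.
Qed.

Lemma hb_graph (R : realType) (X : normedModType R) (Y : set X) (f : X -> R) (M : R) :
  0 <= M -> is_subspace Y -> linear_on Y f -> (forall y, Y y -> f y <= M * `|y|) ->
  exists g : X -> R, linear_on setT g /\ (forall x, g x <= M * `|x|) /\
    (forall y, Y y -> g y = f y).
Proof.
move=> M0 [Y0 Ylin] flin fle.
have f0 : f 0 = 0.
  have := flin 1 0 0 Y0 Y0; rewrite scale1r addr0 mul1r => h.
  by rewrite -[LHS]addr0 in h; exact: esym (addrI _ h).
pose lin (G : set (X * R)) := forall (a : R) p q, G p -> G q ->
   G (a *: p.1 + q.1, a * p.2 + q.2).
pose dom (G : set (X * R)) := forall p, G p -> p.2 <= M * `|p.1|.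
pose Gy : set (X * R) := [set p | Y p.1 /\ p.2 = f p.1].
pose P (G : set (X * R)) := [/\ lin G, dom G & (G = set0 \/ Gy `<=` G)].
have PGy : P Gy.
  split.
  - move=> a [x r] [x' r'] [/= Yx ->] [/= Yx' ->] /=; split; first exact: Ylin.
    by rewrite flin.
  - by move=> [x r] [/= Yx ->]; exact: fle.
  - by right.
have [A [[linA domA A0] maxA]] : exists A, P A /\ forall B, A `<` B -> ~ P B.
  apply: Zorn_bigcup => F FP Ftot; split.
  - move=> a p q [G1 FG1 G1p] [G2 FG2 G2q].
    have [G12|G21] := Ftot _ _ FG1 FG2.
    + exists G2 => //; have [l _ _] := FP _ FG2; exact: l (G12 _ G1p) G2q.
    + exists G1 => //; have [l _ _] := FP _ FG1; exact: l G1p (G21 _ G2q).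
  - move=> p [G FG Gp]; have [_ d _] := FP _ FG; exact: d.
  - case: (pselect (exists G, F G /\ Gy `<=` G)) => [[G [FG GyG]]|nG].
      by right => p /GyG Gp; exists G.
    left; apply/seteqP; split => // p [G FG Gp].
    have [_ _ [G0|GyG]] := FP _ FG; first by rewrite G0 in Gp.
    by exfalso; apply: nG; exists G.
have GyA : Gy `<=` A.
  case: A0 => // A0; exfalso; apply: (maxA Gy) => //; rewrite A0; split => //.
  move=> /(_ (0, f 0)) H; have : (@set0 (X * R)) (0, f 0) by apply: H; split.
  by [].
have A00 : A (0, 0) by have := GyA (0, f 0); rewrite f0; apply; split.
have funA : forall x r s, A (x, r) -> A (x, s) -> r = s.
  move=> x r s Ar As.
  have h1 := domA _ (linA (-1) _ _ Ar As); have h2 := domA _ (linA (-1) _ _ As Ar).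
  move: h1 h2 => /=; rewrite scaleN1r addNr normr0 mulr0.
  move=> h1 h2; lra.
have totA : forall x, exists r, A (x, r).
  move=> x0; apply: contrapT => nx0.
  pose S1 := [set p.2 - M * `|p.1 - x0| | p in A].
  pose c := sup S1.
  have Hkey : forall d r e s, A (d, r) -> A (e, s) ->
      r - M * `|d - x0| <= M * `|e + x0| - s.
    move=> d r e s Adr Aes.
    have := domA _ (linA 1 _ _ Adr Aes); rewrite /= scale1r mul1r => h.
    have : `|d + e| <= `|d - x0| + `|e + x0|.
      have -> : d + e = (d - x0) + (e + x0) by rewrite addrACA addNr addr0.
      exact: ler_normD.
    move=> h'; have := ler_wpM2l M0 h'; nra.
  have H2 : forall e s, A (e, s) -> c <= M * `|e + x0| - s.
    move=> e s Aes; apply: ge_sup; first by exists (0 - M * `|0 - x0|); exists (0, 0).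
    by move=> _ [[d r] Adr <-] /=; exact: Hkey.
  have H1 : forall d r, A (d, r) -> r - M * `|d - x0| <= c.
    move=> d r Adr; apply: ub_le_sup; last by exists (d, r).
    exists (M * `|0 + x0| - 0) => _ [[d' r'] Adr' <-] /=; exact: Hkey.
  have scl : forall (u : R) (d : X) (r : R), 0 < u -> A (d, r) -> A (u^-1 *: d, u^-1 * r).
    by move=> u d r _ Adr; have := linA u^-1 _ _ Adr A00; rewrite /= !addr0.
  have nrm : forall (u : R) (d w : X), 0 < u -> u * `|u^-1 *: d + w| = `|d + u *: w|.
    move=> u d w u0.
    have -> : u * `|u^-1 *: d + w| = `|u *: (u^-1 *: d + w)| by rewrite normrZ gtr0_norm.
    rewrite scalerDr scalerA.
    by rewrite mulfV ?gt_eqF // scale1r.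
  have rr : forall u r : R, 0 < u -> r = u * (u^-1 * r).
    by move=> u r u0; rewrite mulrA mulfV ?gt_eqF // mul1r.
  pose A' := [set p | exists d r t, A (d, r) /\ p = (d + t *: x0, r + t * c)].
  apply: (maxA A').
    split.
      move=> [d r] Adr; exists d, r, 0; split => //; by rewrite scale0r mul0r !addr0.
    move=> /(_ (x0, c)) H; apply: nx0; exists c; apply: H.
    by exists 0, 0, 1; split => //; rewrite scale1r mul1r !add0r.
  split.
  - move=> a p q [d1 [r1 [t1 [A1 ->]]]] [d2 [r2 [t2 [A2 ->]]]] /=.
    exists (a *: d1 + d2), (a * r1 + r2), (a * t1 + t2); split; first exact: (linA a _ _ A1 A2).
    congr pair; last by ring.
    by rewrite scalerDr scalerDl scalerA addrACA.
  - move=> _ [d [r [t [Adr ->]]]] /=.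
    case: (ltrgtP t 0) => [tlt|tgt|->].
    + have u0 : 0 < - t by rewrite oppr_gt0.
      have h := H1 _ _ (scl _ _ _ u0 Adr).
      have hN := nrm _ d (- x0) u0.
      rewrite scalerN -scaleNr opprK in hN.
      have hr := rr _ r u0.
      rewrite -hN; move: h hr; set n := `|_ - x0|; set r' := _ * r.
      move=> h hr; rewrite hr; nra.
    + have h := H2 _ _ (scl _ _ _ tgt Adr).
      have hN := nrm _ d x0 tgt.
      have hr := rr _ r tgt.
      rewrite -hN; move: h hr; set n := `|_ + x0|; set r' := _ * r.
      move=> h hr; rewrite hr; nra.
    + rewrite scale0r mul0r !addr0; exact: (domA _ Adr).
  - right => -[x r] Gyp; exists x, r, 0; split; first exact: GyA.
    by rewrite scale0r mul0r !addr0.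
pose g x := xget 0 [set r | A (x, r)].
have gP : forall x, A (x, g x) by move=> x; exact: (xgetPex 0 (totA x)).
exists g; split; [|split].
- move=> a x y _ _; have /= h := linA a _ _ (gP x) (gP y); exact: funA (gP _) h.
- move=> x; exact: (domA _ (gP x)).
- move=> y Yy; apply: funA (gP y) _; apply: GyA; split => //. 
Qed.

Lemma wU_ca (R : realType) (X : normedModType R) (Y : set X) :
  is_subspace Y ->
  (forall xs : X -> R, dual xs ->
    (exists y, Y y /\ `|y| = 1 /\ xs y = dnorm xs) ->
    best_approx_annih Y xs = [set (fun _ : X => 0 : R)]) ->
  wU_in Y.
Proof.
move=> sY hC f [lf bf] [y0 [Yy0 [y01 fy0]]].
have Y0 := sY.1.
set M := opnorm (fun x : X => `|x|) Y f in fy0 *.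
have M0 : 0 <= M by exact: opnorm_ge0.
split.
- have fle : forall y, Y y -> f y <= M * `|y|.
    by move=> y Yy; apply: le_trans (ler_norm _) _; exact: le_opnorm_mul.
  have [g [lg [gle gY]]] := hb_graph M0 sY lf fle.
  have bg : forall x, `|g x| <= M * `|x|.
    move=> x; rewrite ler_norml gle andbT.
    have := gle (- x); rewrite normrN -scaleN1r (linZ _ I lg I) mulN1r; lra.
  exists g; split; first by split => //; exists M => x _; exact: bg.
  split => //; apply/le_anti/andP; split.
    apply: opnorm_le => // x _ x1; apply: le_trans (bg x) _.
    by rewrite -[M in _ <= M]mulr1 ler_wpM2l.
  apply: ge_sup; first by exists `|f 0|; exists 0 => //; split => //; rewrite normr0.
  move=> _ [y [Yy y1] <-]; rewrite -gY //; apply: opnorm_ge => //.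
  by exists M => x _; exact: bg.
- move=> g1 g2 [dg1 [a1 n1]] [dg2 [a2 n2]].
  have g1y : g1 y0 = dnorm g1 by rewrite a1 // fy0 /dnorm n1.
  have := hC g1 dg1 (ex_intro _ y0 (conj Yy0 (conj y01 g1y))).
  have [Einf _] := keyK sY dg1 Yy0 y01 g1y.
  move=> E.
  have : best_approx_annih Y g1 (g1 - g2).
    split.
      split; first exact: dual_diff.
      by move=> y Yy; change (g1 y - g2 y = 0); rewrite a1 // a2 // subrr.
    have -> : g1 - (g1 - g2) = g2 by apply/funext => x; exact: subKr.
    by rewrite Einf /dnorm n1 n2.
  rewrite E /= => E2; apply/funext => x.
  have := congr1 (fun k => k x) E2 => /= /eqP.
  change (g1 x - g2 x == 0 -> g1 x = g2 x).
  by rewrite subr_eq0 => /eqP.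
Qed.

Unset Implicit Arguments. Set Strict Implicit.

Theorem theorem2p1 (R : realType) (X : completeNormedModType R) (Y : set X)
  (hY : closed_subspace Y) :
  [/\ (wU_in Y <->
        (forall Z : set X, closed_subspace Z -> Z `<=` Y -> proximinal Z ->
           wU_quot Y Z)),
      ((forall Z : set X, closed_subspace Z -> Z `<=` Y -> proximinal Z ->
           wU_quot Y Z) <->
        (forall xs : X -> R, dual xs ->
           (exists y, Y y /\ `|y| = 1 /\ xs y = dnorm xs) ->
           best_approx_annih Y xs = [set (fun _ : X => 0 : R)]))
    & (wU_in Y <->
        (forall xs : X -> R, dual xs ->
           (exists y, Y y /\ `|y| = 1 /\ xs y = dnorm xs) ->
           best_approx_annih Y xs = [set (fun _ : X => 0 : R)]))].
Proof.
have sY := hY.1.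
have AB : wU_in Y <-> (forall Z : set X, closed_subspace Z -> Z `<=` Y -> proximinal Z ->
           wU_quot Y Z) by split; [exact: wU_ab | exact: wU_ba].
have AC : wU_in Y <-> (forall xs : X -> R, dual xs ->
           (exists y, Y y /\ `|y| = 1 /\ xs y = dnorm xs) ->
           best_approx_annih Y xs = [set (fun _ : X => 0 : R)])
  by split; [exact: wU_ac | exact: wU_ca].
split => //; split => H; [apply/AC/AB | apply/AB/AC] => //.
Qed.
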